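(* Let $n\ge2$ be an integer and let $\Gamma(0;n)$ be the group of automorphisms of the Farey tessellation generated by the reflections in all Farey edges having $\infty$ as an endpoint (i.e. the maps $z\mapsto 2k-\bar z$, $k\in\mathbb{Z}$) together with the parabolic transformation $z\mapsto z/(2nz+1)$ centered at $0$ (translation by $2n$ units around the vertex $0$). Then for every $s\in\mathbb{Q}\cup\{\infty\}$ there is a unique $s_0\in([1/n,1]\cap\mathbb{Q})\cup\{\infty,0\}$ such that $s$ lies in the $\Gamma(0;n)$-orbit of $s_0$.
   Context: The Farey tessellation of the upper half plane $\mathbb{H}^2$ is the ideal triangulation whose vertices are $\mathbb{Q}\cup\{\infty\}$, with $p/q$ and $r/s$ (in lowest terms, $\infty=1/0$) joined by a geodesic edge iff $|ps-qr|=1$. $\Gamma(0;n)$ acts on $\partial\mathbb{H}^2=\mathbb{R}\cup\{\infty\}$ and preserves $\mathbb{Q}\cup\{\infty\}$. *)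

(* Defs.v *)
From HB Require Import structures.
From mathcomp Require Import all_boot all_order all_algebra.
Set Implicit Arguments. Unset Strict Implicit. Unset Printing Implicit Defensive.
Import Order.TTheory GRing.Theory Num.Theory.
Local Open Scope ring_scope.

(* Points of Q ∪ {∞} (the vertices of the Farey tessellation):
   [None] is ∞ = 1/0, [Some q] is the rational q. *)
Definition qpoint := option rat.

(* Reflection in the Farey edge from ∞ to k: z |-> 2k - conj z,
   restricted to the boundary Q ∪ {∞}; it fixes ∞. *)
Definition refl_edge (k : int) (x : qpoint) : qpoint :=
  match x with
  | Some q => Some (2 * k%:~R - q)
  | None => None
  end.

Definition parab (n : nat) (x : qpoint) : qpoint :=
  match x with
  | Some q => if 2 * n%:R * q + 1 == 0 then None
              else Some (q / (2 * n%:R * q + 1))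
  | None => Some (1 / (2 * n%:R))
  end.

Definition parab_inv (n : nat) (x : qpoint) : qpoint :=
  match x with
  | Some q => if 1 - 2 * n%:R * q == 0 then None
              else Some (q / (1 - 2 * n%:R * q))
  | None => Some (- (1 / (2 * n%:R)))
  end.

(* One application of a generator of Γ(0;n) or of the inverse of a generator
   (the reflections are involutions). *)
Definition gen_step (n : nat) (x y : qpoint) : Prop :=
  (exists k : int, y = refl_edge k x) \/ y = parab n x \/ y = parab_inv n x.

Inductive gamma_orbit (n : nat) (x : qpoint) : qpoint -> Prop :=
  | orbit_refl : gamma_orbit n x x
  | orbit_step : forall y z, gamma_orbit n x y -> gen_step n y z -> gamma_orbit n x z.

Definition fund_set (n : nat) (x : qpoint) : Prop :=
  match x with
  | None => True
  | Some q => q = 0 \/ (1 / n%:R <= q /\ q <= 1)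
  end.

(* Main.v *)
From HB Require Import structures.
From mathcomp Require Import all_boot all_order all_algebra.
From mathcomp Require Import zify ring lra.
Require Import Defs.
Set Implicit Arguments. Unset Strict Implicit. Unset Printing Implicit Defensive.
Import Order.TTheory GRing.Theory Num.Theory.
Local Open Scope ring_scope.

Definition phi (n : nat) (x : qpoint) : qpoint :=
  match x with None => Some 0 | Some q => if q == 0 then None else Some (1 / (n%:R * q)) end.
Definition rnd (q : rat) : int := Num.floor ((q + 1) / 2).
Definition aq (q : rat) : rat := `|q - 2 * (rnd q)%:~R|.
Definition afun (x : qpoint) : qpoint := match x with None => None | Some q => Some (aq q) end.
Definition bfun n x := phi n (afun (phi n x)).
Definition cfun (x : qpoint) : qpoint := match x with None => None | Some q => Some `|q| end.
Definition DAb (x : qpoint) : bool := match x with None => true | Some q => (0 <= q) && (q <= 1) end.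
Definition DBb n x := DAb (phi n x).
Definition NN (x : qpoint) : bool := match x with None => true | Some q => 0 <= q end.
Definition Arel (x y : qpoint) : Prop := (x = None /\ y = None) \/
  exists p q (k : int), x = Some p /\ y = Some q /\ (q = 2 * k%:~R + p \/ q = 2 * k%:~R - p).
Definition Brel n x y := Arel (phi n x) (phi n y).

Lemma phiK n x : n != 0%N -> phi n (phi n x) = x.
Proof.
move=> n0; case: x => [q|] /=; last by rewrite /= ?eqxx.
have nR : (n%:R : rat) != 0 by rewrite pnatr_eq0.
case: eqP => [->|/eqP q0] //=.
rewrite div1r invr_eq0 mulf_eq0 (negbTE nR) (negbTE q0) /=.
congr Some; field; rewrite nR q0 //.
Qed.

Lemma Arel_refl x : Arel x x.
Proof. case: x => [q|]; [right; exists q, q, 0; split=>//; split=>//; left; rewrite mulr0 add0r //| by left]. Qed.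

Lemma Arel_sym x y : Arel x y -> Arel y x.
Proof.
case=> [[-> ->]|[p [q [k [-> [-> [H|H]]]]]]]; first by left.
- right; exists q, p, (-k); do 2 split => //; left; rewrite H rmorphN /=; ring.
- right; exists q, p, k; do 2 split => //; right; rewrite H; ring.
Qed.

Lemma Arel_trans x y z : Arel x y -> Arel y z -> Arel x z.
Proof.
case=> [[-> ->]|[p [q [k [-> [-> H1]]]]]].
  by case=> [[_ ->]|[p [q [k [//]]]]]; left.
case=> [[//]|[q' [r [k' [[<-] [-> H2]]]]]].
right; exists p, r.
case: H1 => H1; case: H2 => H2.
- exists (k + k'); do 2 split => //; left; rewrite H2 H1 rmorphD /=; ring.
- exists (k' - k); do 2 split => //; right; rewrite H2 H1 rmorphB /=; ring.
- exists (k' + k); do 2 split => //; right; rewrite H2 H1 rmorphD /=; ring.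
- exists (k' - k); do 2 split => //; left; rewrite H2 H1 rmorphB /=; ring.
Qed.

Lemma aq_bnd q : 0 <= aq q <= 1.
Proof.
rewrite /aq normr_ge0 /= ler_norml.
have h1 := floor_le ((q + 1) / 2).
have h2 := floorD1_gt ((q + 1) / 2).
rewrite /rnd; move: h1 h2; set m := Num.floor _.
rewrite rmorphD /= => h1 h2; apply/andP; split; lra.
Qed.

Lemma Arel_a x : Arel x (afun x).
Proof.
case: x => [q|]; last by left.
right; exists q, (aq q); rewrite /aq.
case: (lerP 0 (q - 2 * (rnd q)%:~R)) => h.
- exists (- rnd q); do 2 split => //; left; rewrite ger0_norm // rmorphN /=; ring.
- exists (rnd q); do 2 split => //; right; rewrite ltr0_norm //; ring.
Qed.

Lemma DA_a x : DAb (afun x).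
Proof. by case: x => [q|] //=; apply: aq_bnd. Qed.

Lemma Arel_DA u v : DAb u -> DAb v -> Arel u v -> u = v.
Proof.
move=> hu hv; case=> [[-> ->]|[p [q [k [? [? H]]]]]] //; subst u v; move: hu hv => /=.
move=> /andP[p0 p1] /andP[q0 q1]; congr Some.
have [k0|[k1|k2]] : k = 0 \/ (1 <= k \/ k <= -1) by lia.
- move: H; rewrite k0 mulr0 add0r sub0r; case => Hq; lra.
- have : (1%:~R <= k%:~R :> rat) by rewrite ler_int.
  have [k1'|k2'] : k = 1 \/ 2 <= k by lia.
  + move=> _; move: H; rewrite k1' (_ : (1%:~R : rat) = 1) //; case => Hq; lra.
  + have : (2%:~R <= k%:~R :> rat) by rewrite ler_int.
    move=> h _; case: H => Hq; lra.
- have : (k%:~R <= (-1)%:~R :> rat) by rewrite ler_int.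
  rewrite rmorphN /= => h; case: H => Hq; lra.
Qed.

Lemma afun_eq x y : Arel x y -> afun x = afun y.
Proof.
move=> H; apply: Arel_DA; [exact: DA_a|exact: DA_a|].
apply: Arel_trans (Arel_sym (Arel_a x)) (Arel_trans H (Arel_a y)).
Qed.

Lemma afun_id x : DAb x -> afun x = x.
Proof. move=> hx; apply: Arel_DA (DA_a x) hx (Arel_sym (Arel_a x)). Qed.

Section B.
Variable n : nat.
Hypothesis n0 : n != 0%N.

Lemma Brel_b x : Brel n x (bfun n x).
Proof. by rewrite /Brel /bfun phiK //; apply: Arel_a. Qed.

Lemma Brel_sym x y : Brel n x y -> Brel n y x.
Proof. exact: Arel_sym. Qed.

Lemma Brel_trans x y z : Brel n x y -> Brel n y z -> Brel n x z.
Proof. exact: Arel_trans. Qed.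

Lemma bfun_eq x y : Brel n x y -> bfun n x = bfun n y.
Proof. by move=> H; rewrite /bfun (afun_eq H). Qed.

Lemma bfun_id x : DBb n x -> bfun n x = x.
Proof. by move=> H; rewrite /bfun afun_id // phiK. Qed.

Lemma DB_b x : DBb n (bfun n x).
Proof. by rewrite /DBb /bfun phiK // DA_a. Qed.

Definition negf (x : qpoint) : qpoint := match x with None => None | Some q => Some (- q) end.

Lemma Arel_neg x : Arel x (negf x).
Proof.
case: x => [q|]; last by left.
right; exists q, (-q), 0; do 2 split => //; right; rewrite mulr0 add0r //.
Qed.

Lemma phi_neg x : phi n (negf x) = negf (phi n x).
Proof.
case: x => [q|] /=; first last. by rewrite oppr0.
rewrite oppr_eq0; case: eqP => // /eqP q0.
have nR : (n%:R : rat) != 0 by rewrite pnatr_eq0.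
congr Some; field; rewrite nR q0 //.
Qed.

Lemma Brel_neg x : Brel n x (negf x).
Proof. by rewrite /Brel phi_neg; apply: Arel_neg. Qed.

Lemma Arel_c x : Arel x (cfun x).
Proof.
case: x => [q|]; last by left.
case: (lerP 0 q) => h /=.
- by rewrite ger0_norm //; apply: Arel_refl.
- by rewrite ltr0_norm //; apply: (Arel_neg (Some q)).
Qed.

Lemma Brel_c x : Brel n x (cfun x).
Proof.
case: x => [q|]; last by apply: Arel_refl.
case: (lerP 0 q) => h /=.
- by rewrite ger0_norm //; apply: Arel_refl.
- by rewrite ltr0_norm //; apply: (Brel_neg (Some q)).
Qed.

Lemma parab_phi w : parab n (phi n (Some w)) = phi n (Some (w + 2)).
Proof.
have nR : (n%:R : rat) != 0 by rewrite pnatr_eq0.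
rewrite /=; case: (eqVneq w 0) => [->|w0] /=.
  by rewrite add0r [n%:R * 2]mulrC.
have e : 2 * n%:R * (1 / (n%:R * w)) + 1 = (w + 2) / w.
  by field; rewrite nR w0.
rewrite e mulf_eq0 invr_eq0 (negbTE w0) orbF.
case: eqP => // /eqP w2; congr Some; field; rewrite nR w0 w2 //.
Qed.

Lemma parabinv_phi w : parab_inv n (phi n (Some w)) = phi n (Some (w - 2)).
Proof.
have nR : (n%:R : rat) != 0 by rewrite pnatr_eq0.
rewrite /=; case: (eqVneq w 0) => [->|w0] /=.
  congr Some; field; rewrite nR //.
have e : 1 - 2 * n%:R * (1 / (n%:R * w)) = (w - 2) / w.
  by field; rewrite nR w0.
rewrite e mulf_eq0 invr_eq0 (negbTE w0) orbF.
case: eqP => // /eqP w2; congr Some; field; rewrite nR w0 w2 //.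
Qed.

Lemma step_rel y z : gen_step n y z -> Arel y z \/ Brel n y z.
Proof.
case=> [[k ->]|[->|->]].
- left; case: y => [q|]; last by left.
  right; exists q, (2 * k%:~R - q), k; do 2 split => //; by right.
- right; rewrite -[y](phiK y n0); case: (phi n y) => [w|].
  + rewrite parab_phi /Brel !phiK //; right; exists w, (w + 2), 1; do 2 split => //.
    left; rewrite (_ : (1%:~R : rat) = 1) //; ring.
  + rewrite /= mulr0 add0r oner_eq0 mul0r; apply: Arel_refl.
- right; rewrite -[y](phiK y n0); case: (phi n y) => [w|].
  + rewrite parabinv_phi /Brel !phiK //; right; exists w, (w - 2), (-1); do 2 split => //.
    left; rewrite (_ : ((-1)%:~R : rat) = -1) //; ring.
  + rewrite /= mulr0 subr0 oner_eq0 mul0r; apply: Arel_refl.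
Qed.

Notation G := (gamma_orbit n).

Lemma G_trans x y z : G x y -> G y z -> G x z.
Proof. move=> H1 H2; elim: H2 => [|y' z' _ IH st]; [exact H1 | exact: orbit_step IH st]. Qed.

Lemma G_one x y : gen_step n x y -> G x y.
Proof. move=> st; exact: orbit_step (orbit_refl n x) st. Qed.

Lemma G_neg x : G x (negf x).
Proof.
case: x => [q|]; last exact: orbit_refl.
apply: G_one; left; exists 0; congr Some; rewrite mulr0 add0r //.
Qed.

Lemma G_A x y : Arel x y -> G x y.
Proof.
case=> [[-> ->]|[p [q [k [-> [-> [H|H]]]]]]]; first exact: orbit_refl.
- apply: G_trans (G_neg (Some p)) _; apply: G_one; left; exists k; rewrite H /=; congr Some; ring.
- apply: G_one; left; exists k; rewrite H //.
Qed.

Lemma G_up (m : nat) w : G (phi n (Some w)) (phi n (Some (w + 2 * m%:R))).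
Proof.
elim: m => [|m IH]; first by rewrite mulr0 addr0; apply: orbit_refl.
apply: G_trans IH _; apply: G_one; right; left.
rewrite parab_phi; congr (phi n (Some _)); rewrite -addn1 natrD; ring.
Qed.

Lemma G_down (m : nat) w : G (phi n (Some w)) (phi n (Some (w - 2 * m%:R))).
Proof.
elim: m => [|m IH]; first by rewrite mulr0 subr0; apply: orbit_refl.
apply: G_trans IH _; apply: G_one; right; right.
rewrite parabinv_phi; congr (phi n (Some _)); rewrite -addn1 natrD; ring.
Qed.

Lemma G_shift (k : int) p : G (phi n (Some p)) (phi n (Some (2 * k%:~R + p))).
Proof.
case: k => m.
- by rewrite addrC; apply: G_up.
- rewrite NegzE rmorphN /= (_ : 2 * - (m.+1%:~R) + p = p - 2 * m.+1%:R); first exact: G_down.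
  rewrite -[m.+1%:~R]/(m.+1%:R); ring.
Qed.

Lemma G_B x y : Brel n x y -> G x y.
Proof.
rewrite /Brel -{2}[x](phiK x n0) -{2}[y](phiK y n0).
case: (phi n x) => [p|]; case: (phi n y) => [q|].
- case=> [[H _]|[p' [q' [k [[<-] [[<-] [->|->]]]]]]]; first discriminate H; first exact: G_shift.
  apply: G_trans (_ : G _ (phi n (Some (-p)))) _.
    rewrite (phi_neg (Some p)); exact: G_neg.
  exact: G_shift.
- by case=> [[H _]|[? [? [? [_ [H _]]]]]]; discriminate H.
- by case=> [[_ H]|[? [? [? [H _]]]]]; discriminate H.
- move=> _; exact: orbit_refl.
Qed.

End B.

Lemma den_le (r : rat) (K z : int) : 0 < K -> r * K%:~R = z%:~R -> denq r <= K.
Proof.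
move=> K0 Hr.
have H : (denq r %| numq r * K)%Z.
  have -> : numq r * K = z * denq r.
    apply: (@intr_inj rat); rewrite !rmorphM /= numqE -Hr; ring.
  exact: dvdz_mull (dvdzz _).
rewrite Gauss_dvdzr in H; last by rewrite coprimez_sym coprimezE coprime_num_den.
move: H; rewrite dvdzE => /dvdn_leq.
have : (0 < `|K|)%N by lia.
move=> h /(_ h). have := denq_gt0 r. lia.
Qed.

Lemma fin_arith (a k d : int) (b : bool) : a <= k -> k < d -> `|a|%N = a :> int ->
  `|d|%N = d :> int -> (b <= 1)%N -> (2 * `|a| + b < 2 * `|d| + 0)%N.
Proof. move=> h1 h2 h3 h4 h5; lia. Qed.

Section R.
Variable n : nat.
Hypothesis n1 : (1 <= n)%N.
Let n0 : n != 0%N. Proof. by rewrite -lt0n. Qed.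
Let nR1 : (1 : rat) <= n%:R. Proof. by rewrite ler1n. Qed.

Lemma phi_S (q : rat) : q != 0 -> phi n (Some q) = Some (1 / (n%:R * q)).
Proof. by move=> q0 /=; rewrite (negbTE q0). Qed.

Lemma inv_fact (q : rat) : q != 0 -> (1 / (n%:R * q)) * (n%:R * q) = 1.
Proof.
move=> q0; have nR : (n%:R : rat) != 0 by rewrite pnatr_eq0.
field; rewrite nR q0 //.
Qed.

Lemma rn_fact (q : rat) : (0 <= q -> q <= n%:R * q) /\ (q <= 0 -> n%:R * q <= q).
Proof. have := nR1; split => hq; nra. Qed.

Lemma NN_cover x : NN x -> DAb x || DBb n x.
Proof.
case: x => [q|] //= q0.
case: (lerP q 1) => h; first by rewrite q0.
have qn0 : q != 0 by apply/eqP => e; rewrite e in h; lra.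
rewrite orbC /DBb phi_S //=.
have := inv_fact qn0; set w := 1 / _ => hw; have [rn1 rn2] := rn_fact q; move: hw rn1 rn2; set r := n%:R * q => hw rn1 rn2; have er : r = n%:R * q by [].
apply/orP; left; apply/andP; split; nra.
Qed.

Lemma DB_NN x : DBb n x -> NN x.
Proof.
case: x => [q|] //=; case: (eqVneq q 0) => [->|q0] //=; rewrite /DBb phi_S //= => /andP[h1 h2].
have := inv_fact q0; set w := 1 / _ => hw; have [rn1 rn2] := rn_fact q; move: hw rn1 rn2; set r := n%:R * q => hw rn1 rn2; have er : r = n%:R * q by [].
case: (lerP 0 q) => // h; exfalso; move: h1; rewrite -/w => h1; have := rn2 (ltW h); nra.
Qed.

Lemma NN_a x : NN (afun x).
Proof. by case: x => [q|] //=; case/andP: (aq_bnd q). Qed.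

Lemma NN_b x : NN (bfun n x).
Proof. exact: DB_NN (DB_b n0 x). Qed.

Lemma NN_c x : NN (cfun x).
Proof. by case: x => [q|] //=. Qed.

Lemma cfun_id x : NN x -> cfun x = x.
Proof. by case: x => [q|] //= h; rewrite ger0_norm. Qed.

Lemma fund_AB x : fund_set n x -> DAb x && DBb n x.
Proof.
case: x => [q|] //=; case: (eqVneq q 0) => [->|q0] /=; first by [].
case=> [/eqP|[h1 h2]]; first by rewrite (negbTE q0).
rewrite /DBb phi_S //=.
have := inv_fact q0; set w := 1 / _ => hw; have [rn1 rn2] := rn_fact q; move: hw rn1 rn2; set r := n%:R * q => hw rn1 rn2; have er : r = n%:R * q by [].
have hn : (1 / n%:R) * n%:R = 1 :> rat by field; rewrite pnatr_eq0.
move: hn h1; set v := 1 / n%:R => hn h1; clearbody w r v.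
have v0 : 0 < v by nra.
have r1 : 1 <= r by rewrite er; nra.
apply/andP; split; apply/andP; split; nra.
Qed.

Lemma AB_fund x : DAb x && DBb n x -> fund_set n x.
Proof.
case: x => [q|] //=; case: (eqVneq q 0) => [->|q0] /=; first by left.
rewrite /DBb phi_S //= => /andP[/andP[h1 h2] /andP[h3 h4]].
have := inv_fact q0; set w := 1 / _ => hw; have [rn1 rn2] := rn_fact q; move: hw rn1 rn2; set r := n%:R * q => hw rn1 rn2; have er : r = n%:R * q by [].
have hn : (1 / n%:R) * n%:R = 1 :> rat by field; rewrite pnatr_eq0.
move: h3 h4; rewrite -/w -/r => h3 h4.
move: hn; set v := 1 / n%:R => hn; clearbody w r v.
have q0' : 0 < q by rewrite lt0r q0 h1.
have r0 : 0 < r by have := rn1 h1; lra.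
have r1 : 1 <= r by nra.
right; split => //.
have : n%:R * v <= n%:R * q by nra.
have := nR1; nra.
Qed.

Definition mu (x : qpoint) : nat :=
  match x with None => 0%N | Some q => (2 * `|denq q| + nat_of_bool (1 < q)%R)%N end.

Lemma dec_a x : NN x -> ~~ DAb x -> (mu (afun x) < mu x)%N.
Proof.
case: x => [q|] //= q0; rewrite q0 /= -ltNge => q1.
have /andP[t0 t1] := aq_bnd q.
rewrite q1 (_ : (1 < aq q) = false); last by apply/negbTE; rewrite -leNgt.
have : denq (aq q) <= denq q.
  rewrite /aq denq_norm; apply: (@den_le _ _ (numq q - 2 * rnd q * denq q)) => //.
  rewrite rmorphB !rmorphM /= numqE; ring.
have := absz_denq q; have := absz_denq (aq q); lia.
Qed.

Lemma dec_b x : NN x -> DAb x -> ~~ DBb n x -> (mu (bfun n x) < mu x)%N.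
Proof.
case: x => [q|] //= q0 /andP[_ q1].
case: (eqVneq q 0) => [->|qn0] //.
rewrite /DBb /bfun phi_S //=.
have [rn1 _] := rn_fact q.
have qpos0 : 0 < q by rewrite lt0r qn0 q0.
have nqpos : 0 < n%:R * q by have := rn1 q0; lra.
move: (1 / (n%:R * q)) (inv_fact qn0) => w hw.
rewrite negb_and => hw1.
have w1 : 1 < w.
  case/orP: hw1; rewrite -?ltNge => hh; last by [].
  exfalso; move: hw nqpos hh; clear; move: (n%:R * q) => r; nra.
have /andP[t0 t1] := aq_bnd w.
have qpos : 0 < q by rewrite lt0r qn0.
rewrite (_ : (1 < q) = false); last by apply/negbTE; rewrite -leNgt.
case: (eqVneq (aq w) 0) => [_|tn0] /=; first by have := denq_gt0 q; have := absz_denq q; lia.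
set t := aq w in t0 t1 tn0 *.
set m := rnd w.
set p := numq q; set D := denq q.
have p0 : 0 < p by rewrite /p numq_gt0.
have pR : (0 : rat) < p%:~R by rewrite ltr0z.
have eD : (p%:~R : rat) = q * D%:~R by rewrite numqE.
set K := `|D - 2 * m * n%:R * p|.
have hK : (K%:~R : rat) = n%:R * p%:~R * t.
  rewrite /K intr_norm /t /aq -/m.
  have -> : ((D - 2 * m * n%:R * p)%:~R : rat) = n%:R * p%:~R * (w - 2 * m%:~R).
    rewrite rmorphB !rmorphM /= mulrz_nat eD.
    rewrite (_ : n%:R * (q * D%:~R) * (w - 2 * m%:~R) = D%:~R * (w * (n%:R * q)) - 2 * m%:~R * n%:R * (q * D%:~R)); last by ring.
    rewrite hw; ring.
  rewrite normrM ger0_norm // mulr_ge0 //; lra.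
have Kpos : 0 < K.
  rewrite -(@ltr0z rat) hK; apply: mulr_gt0; last by rewrite lt0r tn0 t0.
  by apply: mulr_gt0 => //; rewrite ltr0n.
have KD : K < D.
  rewrite -(ltr_int rat) hK.
  have : n%:R * p%:~R < (D%:~R : rat).
    have nq1 : n%:R * q < 1 by move: hw w1 nqpos; clear; move: (n%:R * q) => r; nra.
    rewrite eD mulrA; have := denq_gt0 q; rewrite -/D -(@ltr0z rat) => hD.
    by move: (n%:R * q) nq1 (D%:~R : rat) hD; clear => r hr d hd; nra.
  have : 0 <= n%:R * p%:~R :> rat by apply: mulr_ge0; [rewrite ler0n|lra].
  move: (n%:R * p%:~R) t0 t1; clear => a t0 t1 ha hb; nra.
have hden : denq (1 / (n%:R * t)) <= K.
  apply: (@den_le _ _ p) => //; rewrite hK.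
  have nR : (n%:R : rat) != 0 by rewrite pnatr_eq0.
  field; rewrite nR tn0 //.
rewrite /=.
move: hden KD (absz_denq (1 / (n%:R * t))) (absz_denq q) (leq_b1 (1 < 1 / (n%:R * t))).
rewrite -/D; exact: fin_arith.
Qed.

End R.

Fixpoint R0f (n : nat) (f : nat) (y : qpoint) : qpoint :=
  match f with
  | 0%N => y
  | S f => if DAb y && DBb n y then y
           else if DAb y then R0f n f (bfun n y) else R0f n f (afun y)
  end.
Definition nxt n y := if DAb y then bfun n y else afun y.
Definition R0 n y := R0f n (mu y) y.
Definition Red n x := R0 n (cfun x).

Section F.
Variable n : nat.
Hypothesis n1 : (1 <= n)%N.
Let n0 : n != 0%N. Proof. by rewrite -lt0n. Qed.

Lemma DA_NN x : DAb x -> NN x.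
Proof. by case: x => [q|] //= /andP[]. Qed.

Lemma nxt_dec y : NN y -> ~~ (DAb y && DBb n y) -> (mu (nxt n y) < mu y)%N.
Proof.
rewrite /nxt; case E: (DAb y) => hy h.
- by apply: (dec_b n1) => //; move: h; rewrite E.
- by apply: (dec_a n1) => //; rewrite E.
Qed.

Lemma NN_nxt y : NN (nxt n y).
Proof. rewrite /nxt; case: (DAb y) => /=; [apply: NN_b; exact: n1 | exact: NN_a]. Qed.

Lemma R0f_S f y : R0f n f.+1 y = if DAb y && DBb n y then y else R0f n f (nxt n y).
Proof. by rewrite /= /nxt; case: (DAb y). Qed.

Lemma R0f_fund f y : DAb y && DBb n y -> R0f n f y = y.
Proof. by case: f => [|f] //= ->. Qed.

Lemma fundNone : DAb None && DBb n None.
Proof. by rewrite /DBb /= ler01. Qed.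

Lemma mu0 y : (mu y <= 0)%N -> y = None.
Proof. case: y => [q|] //=; have := denq_gt0 q; have := absz_denq q; lia. Qed.

Lemma stab f g y : NN y -> (mu y <= f)%N -> (f <= g)%N -> R0f n g y = R0f n f y.
Proof.
elim: f g y => [|f IH] g y hy hm hfg.
  by rewrite (mu0 hm) !R0f_fund // fundNone.
case: g hfg => [//|g] hfg.
rewrite !R0f_S; case: ifP => // hf.
apply: IH; first exact: NN_nxt.
- have := nxt_dec hy (negbT hf); lia.
- lia.
Qed.

Lemma R0_nxt y : NN y -> ~~ (DAb y && DBb n y) -> R0 n y = R0 n (nxt n y).
Proof.
move=> hy hf; have := nxt_dec hy hf; rewrite /R0.
case E: (mu y) => [|m] // hlt.
rewrite R0f_S (negbTE hf); apply: stab; first exact: NN_nxt; lia.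
Qed.

Lemma R0_a y : NN y -> R0 n (afun y) = R0 n y.
Proof.
move=> hy; case E: (DAb y); first by rewrite afun_id.
by rewrite (R0_nxt hy) /nxt ?E.
Qed.

Lemma R0_b y : NN y -> R0 n (bfun n y) = R0 n y.
Proof.
move=> hy; case E: (DBb n y); first by rewrite bfun_id.
have hA : DAb y by have := NN_cover n1 hy; rewrite E orbF.
by rewrite (R0_nxt hy) /nxt ?E ?hA.
Qed.

Lemma Red_A x y : Arel x y -> Red n x = Red n y.
Proof.
move=> H; rewrite /Red -(R0_a (NN_c x)) -(R0_a (NN_c y)).
rewrite (afun_eq (Arel_sym (Arel_c x))) (afun_eq (Arel_sym (Arel_c y))).
by rewrite (afun_eq H).
Qed.

Lemma Red_B x y : Brel n x y -> Red n x = Red n y.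
Proof.
move=> H; rewrite /Red -(R0_b (NN_c x)) -(R0_b (NN_c y)).
rewrite (bfun_eq (Brel_sym (Brel_c n0 x))) (bfun_eq (Brel_sym (Brel_c n0 y))).
by rewrite (bfun_eq H).
Qed.

Lemma Red_orbit x y : gamma_orbit n x y -> Red n x = Red n y.
Proof.
elim=> [//|y' z' _ IH st]; rewrite IH.
by case: (step_rel n0 st); [exact: Red_A | exact: Red_B].
Qed.

Lemma Red_fund x : fund_set n x -> Red n x = x.
Proof.
move=> /(fund_AB n1) h; have hx : NN x by apply: DA_NN; case/andP: h.
by rewrite /Red cfun_id // /R0 R0f_fund.
Qed.

Lemma R0f_good f y : NN y -> (mu y <= f)%N ->
  (DAb (R0f n f y) && DBb n (R0f n f y)) /\ gamma_orbit n (R0f n f y) y.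
Proof.
elim: f y => [|f IH] y hy hm.
  by rewrite (mu0 hm) /=; split; [exact: fundNone | exact: orbit_refl].
rewrite R0f_S; case: ifP => hf; first by split => //; exact: orbit_refl.
have [h1 h2] := IH (nxt n y) (NN_nxt y) (ltac:(have := nxt_dec hy (negbT hf); lia)).
split => //; apply: G_trans h2 _.
rewrite /nxt; case: (DAb y) => /=.
- exact (G_B n0 (Brel_sym (Brel_b n0 y))).
- exact (G_A n (Arel_sym (Arel_a y))).
Qed.

Lemma Red_good x : fund_set n (Red n x) /\ gamma_orbit n (Red n x) x.
Proof.
have [h1 h2] := R0f_good (NN_c x) (leqnn (mu (cfun x))).
split; first exact (AB_fund n1 h1).
apply: G_trans h2 _; exact (G_A n (Arel_sym (Arel_c x))).
Qed.

End F.

Theorem theorem2p1 (n : nat) (hn : (2 <= n)%N) (s : qpoint) :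
  exists! s0 : qpoint, (fund_set n s0 /\ gamma_orbit n s0 s).
Proof.
have n1 : (1 <= n)%N by apply: leq_trans hn.
exists (Red n s); split; first exact: Red_good.
move=> y [fy oy].
by rewrite -(Red_orbit n1 oy); apply: Red_fund.
Qed.
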